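(* For a Frobenius array $\mu \in \mathcal{F}(\beta)$, the array $\gamma$ constructed from $\mu$ is an $S_{\beta}$-partition, i.e., the entries of $\gamma$ in each row are (weakly) decreasing and the entries in each column are (weakly) decreasing. In addition, the entries in each column of $\gamma$ that came from the positive blocks of $\mu$ are strictly decreasing.
   Context: Let $\beta=(b_1,\ldots,b_m)$ be a composition of $d$ and set $r_i=b_1+\cdots+b_i$ ($r_0=0$). The poset $S_\beta$ is $\bigcup_{l=1}^{m}\{(i,j): l\le i\le l+1,\ r_{l-1}+1\le j\le r_l\}$ with $(i_1,j_1)\le(i_2,j_2)$ iff $i_1\le i_2$ and $j_1\le j_2$; it carries the natural labeling $\nu(i,j)=r_{l-1}+j+(i-l)b_l$ (where $r_{l-1}+1\le j\le r_l$), so an $S_\beta$-partition is an order-reversing map $S_\beta\to\mathbb{N}$ (nonnegative integers). A Frobenius symbol with $d$ columns is a two-rowed array $\left(\begin{smallmatrix}x_1&\cdots&x_d\\ y_1&\cdots&y_d\end{smallmatrix}\right)$ with $x_1>\cdots>x_d\ge0$, $y_1>\cdots>y_d\ge0$; a column is positive if $x_i-y_i\ge1$ and negative if $x_i-y_i\le0$; parity blocks are maximal sets of contiguous columns of the same parity. Subtracting $d-1,d-2,\ldots,0$ from the entries of columns $1,\ldots,d$ in each row gives a Frobenius array $\mu$ (rows weakly decreasing, column parities unchanged). $\mathcal{F}(\beta)$ is the set of Frobenius arrays with $d$ columns and $m$ parity blocks $B_1,\ldots,B_m$, where $B_m$ is positive and $B_i$ has $b_i$ columns. From $\mu\in\mathcal{F}(\beta)$,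 $\gamma$ is built as follows: interchange the top and bottom entries in every column of each negative block to get $\hat\mu$; then place the $(i,j)$-th entry $\hat\mu_{i,j}$ ($i\in\{1,2\}$) at position $(i+l,j)$ of $S_\beta$, where $r_l<j\le r_{l+1}$. *)

(* Defs.v *)
(* All indices are 1-based natural numbers, as in the paper. *)
From mathcomp Require Import all_boot.
Set Implicit Arguments. Unset Strict Implicit. Unset Printing Implicit Defensive.

Definition composition (d : nat) (beta : seq nat) : bool :=
  all (fun b => 0 < b) beta && (sumn beta == d).

Definition rsum (beta : seq nat) (i : nat) : nat := sumn (take i beta).

Definition block_cols (beta : seq nat) (l : nat) : seq nat :=
  iota (rsum beta l.-1).+1 (nth 0 beta l.-1).

Definition blk (beta : seq nat) (j : nat) : nat :=
  (find (fun l => j <= rsum beta l) (iota 1 (size beta))).+1.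

(* A Frobenius array with d columns: two rows (x = top, y = bottom) of
   nonnegative integers, indexed by columns 1..d, each row weakly decreasing. *)
Definition frobenius_array (d : nat) (x y : nat -> nat) : Prop :=
  forall j, 1 <= j -> j < d -> x j.+1 <= x j /\ y j.+1 <= y j.

Definition col_pos (x y : nat -> nat) (j : nat) : bool := y j < x j.

Definition block_pos (beta : seq nat) (x y : nat -> nat) (l : nat) : bool :=
  all (col_pos x y) (block_cols beta l).
Definition block_neg (beta : seq nat) (x y : nat -> nat) (l : nat) : bool :=
  all (fun j => ~~ col_pos x y j) (block_cols beta l).

(* mu in F(beta): the parity blocks (maximal runs of columns of equal parity)
   are exactly B_1, ..., B_m with |B_l| = b_l, and B_m is positive. *)
Definition in_F (d : nat) (beta : seq nat) (x y : nat -> nat) : Prop :=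
  frobenius_array d x y /\
  (forall l, 1 <= l <= size beta -> block_pos beta x y l || block_neg beta x y l) /\
  (forall l, 1 <= l < size beta ->
     (block_pos beta x y l && block_neg beta x y l.+1) ||
     (block_neg beta x y l && block_pos beta x y l.+1)) /\
  (0 < size beta -> block_pos beta x y (size beta)).

(* hat mu: top and bottom entries interchanged in every column of each
   negative block.  i = 1 is the top row, i = 2 the bottom row. *)
Definition hatmu (beta : seq nat) (x y : nat -> nat) (i j : nat) : nat :=
  if block_neg beta x y (blk beta j)
  then (if i == 1 then y j else x j)
  else (if i == 1 then x j else y j).

(* gamma: hatmu_{i,j} is placed at position (i + l, j) of S_beta, where
   r_l < j <= r_{l+1}; i.e. for j in block L = l+1, gamma(L, j) = hatmu_{1,j}
   and gamma(L+1, j) = hatmu_{2,j}. *)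
Definition gamma (beta : seq nat) (x y : nat -> nat) (i j : nat) : nat :=
  hatmu beta x y (i.+1 - blk beta j) j.

Definition inS (beta : seq nat) (i j : nat) : bool :=
  has (fun l => (l <= i <= l.+1) && (j \in block_cols beta l)) (iota 1 (size beta)).

(* an S_beta-partition: an order-reversing map S_beta -> N for the product
   order (natural labeling, so no strictness is imposed). *)
Definition S_partition (beta : seq nat) (g : nat -> nat -> nat) : Prop :=
  forall i1 j1 i2 j2, inS beta i1 j1 -> inS beta i2 j2 ->
    i1 <= i2 -> j1 <= j2 -> g i2 j2 <= g i1 j1.

(* Main.v *)
Require Import Defs.
From mathcomp Require Import all_boot.
From mathcomp Require Import zify.

Lemma take_mono (s : seq nat) i k : i <= k -> sumn (take i s) <= sumn (take k s).
Proof.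
elim: s i k => [|a s IH] [|i] [|k] //= H.
by rewrite leq_add2l; apply: IH.
Qed.

Lemma rsumS beta l : l < size beta -> rsum beta l.+1 = rsum beta l + nth 0 beta l.
Proof.
move=> H; rewrite /rsum (take_nth 0 H) -cats1 sumn_cat /=; lia.
Qed.

Lemma rsum_d beta l : rsum beta l <= sumn beta.
Proof.
rewrite /rsum -{2}(take_size beta).
case: (leqP l (size beta)) => H; first exact: take_mono.
by rewrite take_oversize ?(ltnW H) // take_size.
Qed.

Lemma in_block beta l j : 1 <= l <= size beta -> j \in block_cols beta l ->
  rsum beta l.-1 < j <= rsum beta l.
Proof.
case: l => [|l] //= Hl; rewrite mem_iota rsumS //=; lia.
Qed.

Lemma blkE beta l j : 1 <= l <= size beta -> j \in block_cols beta l -> blk beta j = l.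
Proof.
move=> Hl Hj; have [H1 H2] := andP (in_block _ _ _ Hl Hj).
rewrite /blk.
set p := (fun l0 => j <= rsum beta l0).
have Hs : size (iota 1 (size beta)) = size beta by rewrite size_iota.
have Hpl : p (nth 0 (iota 1 (size beta)) l.-1).
  rewrite nth_iota /p; last lia.
  by have -> : 1 + l.-1 = l by lia.
have Hhas : has p (iota 1 (size beta)).
  apply/(has_nthP 0); exists l.-1 => //; rewrite Hs; lia.
case: (ltngtP (find p (iota 1 (size beta))) l.-1) => Hf.
- have := nth_find 0 Hhas.
  rewrite nth_iota; last lia.
  rewrite /p => H3.
  have : rsum beta (1 + find p (iota 1 (size beta))) <= rsum beta l.-1
    by apply: take_mono; lia.
  unfold p in *; lia.
- by have := before_find 0 Hf; rewrite Hpl.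
- lia.
Qed.

Lemma mono d (x y : nat -> nat) a b : frobenius_array d x y -> 1 <= a -> a <= b -> b <= d ->
  x b <= x a /\ y b <= y a.
Proof.
move=> Hf Ha; elim: b => [|b IH] Hab Hb; first lia.
case: (ltngtP a b.+1) => H; last by subst.
- have [H1 H2] := IH ltac:(lia) ltac:(lia).
  have [H3 H4] := Hf b ltac:(lia) ltac:(lia).
  lia.
- lia.
Qed.

Lemma colpos beta (x y : nat -> nat) l j : j \in block_cols beta l ->
  (block_pos beta x y l -> y j < x j) /\ (block_neg beta x y l -> x j <= y j).
Proof.
move=> Hj; split => H.
- by have := allP H j Hj.
- have := allP H j Hj; rewrite /col_pos; lia.
Qed.

Lemma gammaE d beta x y l j : in_F d beta x y -> 1 <= l <= size beta ->
  j \in block_cols beta l ->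
  gamma beta x y l j = maxn (x j) (y j) /\ gamma beta x y l.+1 j = minn (x j) (y j).
Proof.
move=> [Hfa [Hpn [Halt Hlast]]] Hl Hj.
rewrite /gamma (blkE _ _ _ Hl Hj).
have -> : l.+1 - l = 1 by lia.
have -> : l.+2 - l = 2 by lia.
rewrite /hatmu /= (blkE _ _ _ Hl Hj).
have [Hp Hn] := colpos beta x y l j Hj.
case E: (block_neg beta x y l).
- have := Hn E; lia.
- have := Hpn l Hl; rewrite E orbF => /Hp; lia.
Qed.

Lemma cross d beta x y l1 l2 j1 j2 : composition d beta -> in_F d beta x y ->
  1 <= l1 -> l1 < l2 -> l2 <= size beta ->
  j1 \in block_cols beta l1 -> j2 \in block_cols beta l2 ->
  maxn (x j2) (y j2) <= minn (x j1) (y j1).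
Proof.
move=> /andP [Hpos /eqP Hd] [Hfa [Hpn [Halt Hlast]]] H1 H12 H2 Hj1 Hj2.
have B1 := in_block beta l1 j1 ltac:(lia) Hj1.
have B2 := in_block beta l2 j2 ltac:(lia) Hj2.
have Hr : rsum beta l1 <= rsum beta l2.-1 by apply: take_mono; lia.
have Hd2 : rsum beta l2 <= d by rewrite -Hd; apply: rsum_d.
have Hnth : 0 < nth 0 beta l1.
  by apply: (allP Hpos); apply: mem_nth; apply: leq_trans H12 H2.
set k := (rsum beta l1).+1.
have Hk : k \in block_cols beta l1.+1 by rewrite /block_cols /= mem_iota; lia.
have [Hp1 Hn1] := colpos beta x y l1 j1 Hj1.
have [Hpk Hnk] := colpos beta x y l1.+1 k Hk.
have [M1 M2] := mono d x y j1 k Hfa ltac:(lia) ltac:(lia) ltac:(lia).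
have [M3 M4] := mono d x y k j2 Hfa ltac:(lia) ltac:(lia) ltac:(lia).
have := Halt l1 ltac:(lia).
case/orP => /andP [Ha Hb].
- have := Hp1 Ha; have := Hnk Hb; lia.
- have := Hn1 Ha; have := Hpk Hb; lia.
Qed.

Theorem lemma4p2 (d : nat) (beta : seq nat) (x y : nat -> nat) :
  composition d beta -> in_F d beta x y ->
  S_partition beta (gamma beta x y) /\
  (forall l j, 1 <= l <= size beta -> block_pos beta x y l ->
     j \in block_cols beta l -> gamma beta x y l.+1 j < gamma beta x y l j).
Proof.
move=> Hc HF; split; last first.
  move=> l j Hl Hp Hj.
  have [E1 E2] := gammaE d beta x y l j HF Hl Hj.
  have [Hp1 _] := colpos beta x y l j Hj.
  have := Hp1 Hp; rewrite E1 E2; lia.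
move=> i1 j1 i2 j2 /hasP [l1 L1 /andP [Hi1 Hj1]] /hasP [l2 L2 /andP [Hi2 Hj2]] Hi Hj.
move: L1 L2; rewrite !mem_iota => L1 L2.
have Hc' := Hc; move: Hc' => /andP [_ /eqP Hd].
have B1 := in_block beta l1 j1 ltac:(lia) Hj1.
have B2 := in_block beta l2 j2 ltac:(lia) Hj2.
have Hd2 : rsum beta l2 <= d by rewrite -Hd; apply: rsum_d.
have [F1 F2] := gammaE d beta x y l1 j1 HF ltac:(lia) Hj1.
have [G1 G2] := gammaE d beta x y l2 j2 HF ltac:(lia) Hj2.
have [M1 M2] := mono d x y j1 j2 (proj1 HF) ltac:(lia) ltac:(lia) ltac:(lia).
have Hl12 : l1 <= l2.
  case: (leqP l1 l2) => // H.
  have : rsum beta l2 <= rsum beta l1.-1 by apply: take_mono; lia.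
  lia.
have Ei1 : i1 = l1 \/ i1 = l1.+1 by lia.
have Ei2 : i2 = l2 \/ i2 = l2.+1 by lia.
case: (ltngtP l1 l2) Hl12 => H12 // _.
- have := cross d beta x y l1 l2 j1 j2 Hc HF ltac:(lia) H12 ltac:(lia) Hj1 Hj2.
  case: Ei1 => E1; case: Ei2 => E2; subst i1 i2; rewrite ?F1 ?F2 ?G1 ?G2; lia.
- subst l2.
  case: Ei1 => E1; case: Ei2 => E2; subst i1 i2; rewrite ?F1 ?F2 ?G1 ?G2; lia.
Qed.
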